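(* Let $f\in C^1[0,1]$ with $f(0)=0$, $h:=f'$, $q$ satisfying (q), and $c^*$ as below. Let $c_2>c_1\ge c^*$, and let $z_1$, $z_2$ be solutions of $(P_{c_1})$ and $(P_{c_2})$ respectively. If $z_1(1)\le z_2(1)$, then $z_1(\varphi)<z_2(\varphi)$ for all $\varphi\in(0,1)$.
   Context: Condition (q): $q\in C[0,1]$, $q>0$ on $(0,1)$, $q(0)=q(1)=0$, and $\limsup_{\varphi\to0^+}q(\varphi)/\varphi<+\infty$. For $c\in\mathbb R$, a solution of problem $(P_c)$ is a function $z\in C[0,1]\cap C^1(0,1)$ with $\dot z(\varphi)=h(\varphi)-c-q(\varphi)/z(\varphi)$ and $z(\varphi)<0$ for all $\varphi\in(0,1)$, and $z(0)=0$. A solution of $(P^{00}_c)$ is a solution of $(P_c)$ which also satisfies $z(1)=0$. $c^*$ denotes the real number such that $(P^{00}_c)$ has a solution iff $c\ge c^*$ (that solution being unique). *)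

(* Defs.v *)
From Stdlib Require Import Reals.
From Coquelicot Require Import Coquelicot.
Open Scope R_scope.

Definition cont_on01 (g : R -> R) : Prop :=
  forall x, 0 <= x <= 1 ->
    filterlim g (within (fun y => 0 <= y <= 1) (locally x)) (locally (g x)).

(* f in C^1[0,1] with derivative h : f, h continuous on [0,1] and
   f' = h on (0,1) (so h is the continuous extension of f' to [0,1]). *)
Definition C1_with_deriv (f h : R -> R) : Prop :=
  cont_on01 f /\ cont_on01 h /\
  (forall x, 0 < x < 1 -> is_derive f x (h x)).

Definition cond_q (q : R -> R) : Prop :=
  cont_on01 q /\
  (forall x, 0 < x < 1 -> 0 < q x) /\
  q 0 = 0 /\ q 1 = 0 /\
  (* limsup_{phi -> 0+} q(phi)/phi < +oo *)
  (exists M delta, 0 < delta /\ forall x, 0 < x < delta -> q x / x <= M).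

Definition sol_P (h q : R -> R) (c : R) (z : R -> R) : Prop :=
  cont_on01 z /\
  (forall x, 0 < x < 1 -> is_derive z x (h x - c - q x / z x)) /\
  (forall x, 0 < x < 1 -> continuous (Derive z) x) /\
  (forall x, 0 < x < 1 -> z x < 0) /\
  z 0 = 0.

Definition sol_P00 (h q : R -> R) (c : R) (z : R -> R) : Prop :=
  sol_P h q c z /\ z 1 = 0.

(* Main.v *)
Require Import Defs.
From Stdlib Require Import Reals Lra.
From Coquelicot Require Import Coquelicot.
Open Scope R_scope.

Lemma loc_dec (w : R -> R)
  (Hd : forall p, 0 < p < 1 -> w p <= 0 -> exists D, D < 0 /\ derivable_pt_lim w p D) :
  forall p t1, 0 < p < 1 -> p < t1 -> w p <= 0 -> exists t, p < t < t1 /\ w t < w p.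
Proof.
  intros p t1 Hp Ht Hw.
  destruct (Hd p Hp Hw) as [D [HD Hl]].
  destruct (Hl (- D / 2)) as [d Hdl]; [lra|].
  set (hh := Rmin (d / 2) ((t1 - p) / 2)).
  assert (Hd0 := cond_pos d).
  assert (H1 : 0 < hh) by (unfold hh; apply Rmin_pos; lra).
  assert (H2 : hh <= d / 2) by apply Rmin_l.
  assert (H3 : hh <= (t1 - p) / 2) by apply Rmin_r.
  specialize (Hdl hh ltac:(lra) ltac:(rewrite Rabs_right; lra)).
  exists (p + hh). split; [lra|].
  apply Rabs_def2 in Hdl. destruct Hdl as [Ha Hb].
  assert (Hq : (w (p + hh) - w p) / hh < 0) by lra.
  assert (Hq2 : (w (p + hh) - w p) < 0).
  { replace (w (p + hh) - w p) with ((w (p + hh) - w p) / hh * hh) by (field; lra).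
    nra. }
  lra.
Qed.

Lemma mono_dec (w : R -> R)
  (Hd : forall p, 0 < p < 1 -> w p <= 0 -> exists D, D < 0 /\ derivable_pt_lim w p D)
  (Hc : forall p, 0 < p < 1 -> continuity_pt w p) :
  forall a t1, 0 < a -> a < t1 -> t1 < 1 -> w a <= 0 -> w t1 <= w a.
Proof.
  intros a t1 Ha Hat Ht1 Hw.
  set (E := fun t => a <= t <= t1 /\ w t <= w a).
  destruct (completeness E) as [s [Hub Hlub]].
  { exists t1. intros t [Ht _]. lra. }
  { exists a. split; lra. }
  assert (Has : a <= s) by (apply Hub; split; lra).
  assert (Hst : s <= t1) by (apply Hlub; intros t [Ht _]; lra).
  assert (Hws : w s <= w a).
  { destruct (Rle_or_lt (w s) (w a)) as [|Hlt]; [assumption|].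
    exfalso.
    destruct (Hc s ltac:(lra) (w s - w a) ltac:(lra)) as [al [Hal Hcal]].
    assert (s <= s - al / 2); [|lra].
    apply Hlub. intros t [Ht Hwt].
    destruct (Rle_or_lt t (s - al / 2)) as [|Hgt]; [assumption|].
    exfalso.
    assert (t <= s) by (apply Hub; split; assumption).
    assert (Hdist : R_dist t s < al).
    { unfold R_dist. rewrite Rabs_left1; lra. }
    destruct (Req_dec t s) as [Ets|Nts]; [subst t; lra|].
    specialize (Hcal t (conj (conj I (not_eq_sym Nts)) Hdist)). simpl in Hcal. unfold R_dist in Hcal.
    apply Rabs_def2 in Hcal. lra. }
  destruct (Req_dec s t1) as [->|Hne]; [assumption|].
  exfalso.
  destruct (loc_dec w Hd s t1 ltac:(lra) ltac:(lra) ltac:(lra)) as [t [Ht Hwt]].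
  assert (t <= s) by (apply Hub; split; lra).
  lra.
Qed.

Lemma mono_sdec (w : R -> R)
  (Hd : forall p, 0 < p < 1 -> w p <= 0 -> exists D, D < 0 /\ derivable_pt_lim w p D)
  (Hc : forall p, 0 < p < 1 -> continuity_pt w p) :
  forall a t1, 0 < a -> a < t1 -> t1 < 1 -> w a <= 0 -> w t1 < w a.
Proof.
  intros a t1 Ha Hat Ht1 Hw.
  destruct (loc_dec w Hd a t1 ltac:(lra) Hat Hw) as [t [Ht Hwt]].
  assert (w t1 <= w t) by (apply (mono_dec w Hd Hc); lra).
  lra.
Qed.

Lemma cont_at1 (z : R -> R) : cont_on01 z -> forall e, 0 < e ->
  exists d, 0 < d /\ forall y, 0 <= y <= 1 -> 1 - d < y -> Rabs (z y - z 1) < e.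
Proof.
  intros Hz e He.
  specialize (Hz 1 ltac:(lra)).
  destruct (proj1 (filterlim_locally _ _) Hz (mkposreal e He)) as [d Hd].
  exists d. split; [apply cond_pos|].
  intros y Hy Hyd. apply (Hd y); [|exact Hy].
  change (Rabs (y - 1) < d). rewrite Rabs_left1; lra.
Qed.

Theorem corollary5p2 (f h q : R -> R) (cstar c1 c2 : R) (z1 z2 : R -> R) :
  C1_with_deriv f h ->
  f 0 = 0 ->
  cond_q q ->
  (forall c : R, (exists z : R -> R, sol_P00 h q c z) <-> cstar <= c) ->
  cstar <= c1 -> c1 < c2 ->
  sol_P h q c1 z1 -> sol_P h q c2 z2 ->
  z1 1 <= z2 1 ->
  forall x : R, 0 < x < 1 -> z1 x < z2 x.
Proof.
  intros _ _ [_ [Hqp _]] _ _ Hc12 [Hc1 [Hd1 [_ [Hn1 _]]]] [Hc2 [Hd2 [_ [Hn2 _]]]] H1 x Hx.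
  set (w := fun y => z2 y - z1 y).
  assert (Hdw : forall p, 0 < p < 1 -> derivable_pt_lim w p
     ((h p - c2 - q p / z2 p) - (h p - c1 - q p / z1 p))).
  { intros p Hp. apply derivable_pt_lim_minus; apply is_derive_Reals; auto. }
  assert (Hd : forall p, 0 < p < 1 -> w p <= 0 -> exists D, D < 0 /\ derivable_pt_lim w p D).
  { intros p Hp Hwp. eexists. split; [|apply Hdw; exact Hp].
    unfold w in Hwp.
    assert (A1 := Hn1 p Hp). assert (A2 := Hn2 p Hp). assert (Q := Hqp p Hp).
    assert (E : q p / z1 p - q p / z2 p = q p * (z2 p - z1 p) / (z1 p * z2 p)).
    { field; lra. }
    assert (q p * (z2 p - z1 p) / (z1 p * z2 p) <= 0).
    { unfold Rdiv. apply Rmult_le_0_r.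
      - nra.
      - left. apply Rinv_0_lt_compat. nra. }
    lra. }
  assert (Hc : forall p, 0 < p < 1 -> continuity_pt w p).
  { intros p Hp. apply derivable_continuous_pt. eexists. apply Hdw. exact Hp. }
  destruct (Rlt_or_le (z1 x) (z2 x)) as [|Hle]; [assumption|].
  exfalso.
  assert (Hwx : w x <= 0) by (unfold w; lra).
  set (m := (x + 1) / 2).
  assert (Hm : w m < w x) by (apply (mono_sdec w Hd Hc); unfold m; lra).
  set (e := - w m / 2).
  assert (He : 0 < e) by (unfold e; lra).
  destruct (cont_at1 z1 Hc1 e He) as [d1 [Hd1p Hy1]].
  destruct (cont_at1 z2 Hc2 e He) as [d2 [Hd2p Hy2]].
  set (y := 1 - Rmin (Rmin d1 d2) (1 - m) / 2).
  assert (Hmin1 : Rmin (Rmin d1 d2) (1 - m) <= Rmin d1 d2) by apply Rmin_l.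
  assert (Hmin2 : Rmin (Rmin d1 d2) (1 - m) <= 1 - m) by apply Rmin_r.
  assert (Hmin3 : Rmin d1 d2 <= d1) by apply Rmin_l.
  assert (Hmin4 : Rmin d1 d2 <= d2) by apply Rmin_r.
  assert (Hpos : 0 < Rmin (Rmin d1 d2) (1 - m)).
  { apply Rmin_pos; [apply Rmin_pos; lra| unfold m; lra]. }
  assert (Hmy : m < y < 1) by (unfold y; lra).
  assert (Hwy : w y < w m) by (apply (mono_sdec w Hd Hc); unfold m in *; lra).
  specialize (Hy1 y ltac:(unfold m in *; lra) ltac:(unfold y; lra)).
  specialize (Hy2 y ltac:(unfold m in *; lra) ltac:(unfold y; lra)).
  apply Rabs_def2 in Hy1. apply Rabs_def2 in Hy2.
  unfold w, e in *. clear -Hy1 Hy2 Hwy H1. unfold w in *. lra.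
Qed.
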